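(* Every maximal chain set $E\subseteq M$ is closed, and hence compact.
   Context: Hybrid system setup: $G$ is a finite directed graph with vertex set $V=\{1,\dots,n\}$ (loops allowed); $\Omega$ is the set of sequences $(x_i)_{i\in\mathbb Z}\in V^{\mathbb Z}$ with an edge from $x_i$ to $x_{i+1}$ for all $i$. Fix $h>0$. $\bar\Delta$ is the set of functions $x:\mathbb R\to V$ constant on each $[kh,(k+1)h)$, $k\in\mathbb Z$, with $(x(kh))_k\in\Omega$; $\Delta=\{x(\cdot+t):x\in\bar\Delta, t\in\mathbb R\}$ with metric $d(x,y)=\sum_{i\in\mathbb Z}4^{-|i|}\frac1h\int_{ih}^{(i+1)h}\delta(x,y,t)\,dt$ ($\delta=1$ if $x(t)\ne y(t)$, else $0$), and $\psi_t(f)=f(\cdot+t)$. $M$ is a compact metric space (e.g. a compact subset of $\mathbb R^d$) and $\phi_1,\dots,\phi_n$ are continuous flows on $M$, $\phi_i$ associated with vertex $i$. For $x\in M$, $f\in\Delta$, $\varphi(\cdot,x,f):\mathbb R\to M$ is the continuous curve with $\varphi(0,x,f)=x$ such that whenever $f\equiv i$ on an interval $I$, $\varphi(t,x,f)=\phi_i(t-s,\varphi(s,x,f))$ for all $s,t$ in the closure of $I$. A set $E\subseteq M$ is a chain set if (i) for every $x\in E$ there is $f\in\Delta$ with $\varphi(t,x,f)\in E$ for all $t\in\mathbb R$, and (ii) for all $x,y\in E$ and all $\varepsilon,T>0$ there are $k\in\mathbb N$, $x_0,\dots,x_k\in M$, $f_0,\dots,f_{k-1}\in\Delta$ and $t_0,\dots,t_{k-1}\ge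 T$ with $x_0=x$, $x_k=y$ and $d(\varphi(t_j,x_j,f_j),x_{j+1})\le\varepsilon$ for $j=0,\dots,k-1$ (an $(\varepsilon,T)$-chain from $x$ to $y$). A maximal chain set is a chain set not properly contained in another chain set. *)

(* Defs.v *)
From Stdlib Require Import Reals ZArith.
Open Scope R_scope.

Definition is_metric {M : Type} (dM : M -> M -> R) : Prop :=
  (forall x y, 0 <= dM x y) /\
  (forall x y, dM x y = 0 <-> x = y) /\
  (forall x y, dM x y = dM y x) /\
  (forall x y z, dM x z <= dM x y + dM y z).

Definition m_open {M : Type} (dM : M -> M -> R) (U : M -> Prop) : Prop :=
  forall x, U x -> exists r, 0 < r /\ forall y, dM x y < r -> U y.

Definition m_closed {M : Type} (dM : M -> M -> R) (E : M -> Prop) : Prop :=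
  m_open dM (fun x => ~ E x).

Definition m_compact {M : Type} (dM : M -> M -> R) (K : M -> Prop) : Prop :=
  forall (I : Type) (U : I -> M -> Prop),
    (forall i, m_open dM (U i)) ->
    (forall x, K x -> exists i, U i x) ->
    exists l : list I, forall x, K x -> exists i, List.In i l /\ U i x.

Definition m_compact_space {M : Type} (dM : M -> M -> R) : Prop :=
  m_compact dM (fun _ => True).

Definition is_cont_flow {M : Type} (dM : M -> M -> R) (phi : R -> M -> M) : Prop :=
  (forall x, phi 0 x = x) /\
  (forall s t x, phi (s + t) x = phi s (phi t x)) /\
  (forall t x eps, 0 < eps -> exists del, 0 < del /\
     forall s y, Rabs (s - t) < del -> dM x y < del -> dM (phi t x) (phi s y) < eps).

Definition in_Delta_bar (n : nat) (G : nat -> nat -> Prop) (h : R) (x : R -> nat) : Prop :=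
  (forall (k : Z) (t : R), IZR k * h <= t < (IZR k + 1) * h -> x t = x (IZR k * h)) /\
  (forall k : Z, (1 <= x (IZR k * h)%R)%nat /\ (x (IZR k * h)%R <= n)%nat /\
                 G (x (IZR k * h)) (x ((IZR k + 1) * h))).

Definition in_Delta (n : nat) (G : nat -> nat -> Prop) (h : R) (f : R -> nat) : Prop :=
  exists x t0, in_Delta_bar n G h x /\ forall s, f s = x (s + t0).

Definition is_solution {M : Type} (dM : M -> M -> R) (flow : nat -> R -> M -> M)
    (x : M) (f : R -> nat) (gam : R -> M) : Prop :=
  gam 0 = x /\
  (forall t eps, 0 < eps -> exists del, 0 < del /\
     forall s, Rabs (s - t) < del -> dM (gam t) (gam s) < eps) /\
  (forall (i : nat) (a b : R), a < b -> (forall u, a < u < b -> f u = i) ->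
     forall s t, a <= s <= b -> a <= t <= b -> gam t = flow i (t - s) (gam s)).

Definition eps_T_chain {M : Type} (dM : M -> M -> R) (n : nat) (G : nat -> nat -> Prop)
    (h : R) (flow : nat -> R -> M -> M) (eps T : R) (x y : M) : Prop :=
  exists (k : nat) (xs : nat -> M) (fs : nat -> R -> nat) (ts : nat -> R),
    (1 <= k)%nat /\ xs 0%nat = x /\ xs k = y /\
    forall j, (j < k)%nat ->
      in_Delta n G h (fs j) /\ T <= ts j /\
      exists gam, is_solution dM flow (xs j) (fs j) gam /\
                  dM (gam (ts j)) (xs (S j)) <= eps.

Definition chain_set {M : Type} (dM : M -> M -> R) (n : nat) (G : nat -> nat -> Prop)
    (h : R) (flow : nat -> R -> M -> M) (E : M -> Prop) : Prop :=
  (forall x, E x -> exists f gam, in_Delta n G h f /\ is_solution dM flow x f gam /\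
                                  forall t, E (gam t)) /\
  (forall x y, E x -> E y -> forall eps T, 0 < eps -> 0 < T ->
     eps_T_chain dM n G h flow eps T x y).

Definition maximal_chain_set {M : Type} (dM : M -> M -> R) (n : nat)
    (G : nat -> nat -> Prop) (h : R) (flow : nat -> R -> M -> M) (E : M -> Prop) : Prop :=
  chain_set dM n G h flow E /\
  forall E', chain_set dM n G h flow E' -> (forall x, E x -> E' x) ->
             forall x, E' x -> E x.

(* Main.v *)
Require Import Defs.
From Stdlib Require Import Reals ZArith Lra Lia Classical ClassicalEpsilon Rtopology List.
Open Scope R_scope.

Lemma met_refl {M} (dM : M -> M -> R) x : is_metric dM -> dM x x = 0.
Proof. intros (_&H&_). apply H. reflexivity. Qed.

Lemma fl_0 {M} (dM : M -> M -> R) phi x : is_cont_flow dM phi -> phi 0 x = x.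
Proof. intros (H&_). apply H. Qed.

Lemma fl_comp {M} (dM : M -> M -> R) phi s t x : is_cont_flow dM phi -> phi s (phi t x) = phi (s+t) x.
Proof. intros (_&H&_). rewrite H. reflexivity. Qed.

Lemma fl_cont_time {M} (dM : M -> M -> R) phi t x eps : is_metric dM -> is_cont_flow dM phi -> 0 < eps ->
  exists del, 0 < del /\ forall s, Rabs (s - t) < del -> dM (phi t x) (phi s x) < eps.
Proof.
  intros Hm (_&_&H) He. destruct (H t x eps He) as (del&Hd&H').
  exists del; split; auto. intros s Hs. apply H'; auto. rewrite met_refl; auto.
Qed.

Lemma fl_cont_space {M} (dM : M -> M -> R) phi t x eps : is_cont_flow dM phi -> 0 < eps ->
  exists del, 0 < del /\ forall y, dM x y < del -> dM (phi t x) (phi t y) < eps.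
Proof.
  intros (_&_&H) He. destruct (H t x eps He) as (del&Hd&H').
  exists del; split; auto. intros y Hy. apply H'; auto. replace (t-t) with 0 by ring. rewrite Rabs_R0; auto.
Qed.

Definition idx0 (h u : R) : Z := (up (u / h) - 1)%Z.

Lemma idx0_spec h u : 0 < h -> IZR (idx0 h u) * h <= u < (IZR (idx0 h u) + 1) * h.
Proof.
  intros Hh. unfold idx0. destruct (archimed (u/h)) as [H1 H2].
  rewrite minus_IZR. set (r := u / h) in *.
  assert (Hu : u = r * h) by (unfold r; field; lra). rewrite Hu.
  split; nra.
Qed.

Lemma idx0_unique h u k : 0 < h -> IZR k * h <= u < (IZR k + 1) * h -> idx0 h u = k.
Proof.
  intros Hh [H1 H2]. unfold idx0. set (r := u / h).
  assert (Hu : u = r * h) by (unfold r; field; lra). rewrite Hu in H1, H2.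
  assert (IZR k <= r) by nra. assert (r < IZR k + 1) by nra.
  assert (E : (k + 1)%Z = up r). { apply tech_up; rewrite plus_IZR; simpl; lra. }
  lia.
Qed.

Definition sk (h tau : R) (k : Z) : R := IZR k * h - tau.

Lemma sk_succ h tau k : sk h tau (k+1) = sk h tau k + h.
Proof. unfold sk. rewrite plus_IZR. simpl. ring. Qed.

Definition idx (h tau s : R) : Z := idx0 h (s + tau).

Lemma idx_spec h tau s : 0 < h -> sk h tau (idx h tau s) <= s < sk h tau (idx h tau s) + h.
Proof. intros Hh. unfold sk, idx. pose proof (idx0_spec h (s+tau) Hh). nra. Qed.

Lemma idx_unique h tau s k : 0 < h -> sk h tau k <= s < sk h tau k + h -> idx h tau s = k.
Proof. intros Hh H. unfold idx. apply idx0_unique; auto. unfold sk in H. nra. Qed.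

Lemma sk_mono h tau k l : 0 < h -> (k <= l)%Z -> sk h tau k <= sk h tau l.
Proof. intros Hh Hk. unfold sk. apply IZR_le in Hk. nra. Qed.

Lemma idx_mono h tau s t : 0 < h -> s <= t -> (idx h tau s <= idx h tau t)%Z.
Proof.
  intros Hh Hst. destruct (Z_le_gt_dec (idx h tau s) (idx h tau t)); auto.
  exfalso. pose proof (idx_spec h tau s Hh). pose proof (idx_spec h tau t Hh).
  assert (sk h tau (idx h tau t + 1) <= sk h tau (idx h tau s)) by (apply sk_mono; [lra|lia]).
  rewrite sk_succ in H1. lra.
Qed.

Definition flows_ok {M} (dM : M -> M -> R) n (flow : nat -> R -> M -> M) :=
  forall i, (1 <= i <= n)%nat -> is_cont_flow dM (flow i).
Definition crange n (c : Z -> nat) := forall k, (1 <= c k <= n)%nat.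

Fixpoint pf {M} (flow : nat -> R -> M -> M) (c : Z -> nat) (h : R) (k0 : Z) (p0 : M) (j : nat) : M :=
  match j with O => p0 | S j' => flow (c (k0 + Z.of_nat j')%Z) h (pf flow c h k0 p0 j') end.
Fixpoint pb {M} (flow : nat -> R -> M -> M) (c : Z -> nat) (h : R) (k0 : Z) (p0 : M) (j : nat) : M :=
  match j with O => p0 | S j' => flow (c (k0 - Z.of_nat j' - 1)%Z) (-h) (pb flow c h k0 p0 j') end.
Definition pZ {M} (flow : nat -> R -> M -> M) c h k0 (p0 : M) (k : Z) : M :=
  if Z_le_dec k0 k then pf flow c h k0 p0 (Z.to_nat (k - k0)) else pb flow c h k0 p0 (Z.to_nat (k0 - k)).

Lemma pZ_le {M} (flow : nat -> R -> M -> M) c h k0 (p0 : M) k :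
  (k <= k0)%Z -> pZ flow c h k0 p0 k = pb flow c h k0 p0 (Z.to_nat (k0 - k)).
Proof.
  intros Hk. unfold pZ. destruct (Z_le_dec k0 k).
  - assert (k = k0) by lia. subst. replace (k0 - k0)%Z with 0%Z by lia. reflexivity.
  - reflexivity.
Qed.

Lemma pZ_succ {M} (dM : M -> M -> R) n flow c h k0 (p0 : M) k :
  flows_ok dM n flow -> crange n c ->
  pZ flow c h k0 p0 (k+1) = flow (c k) h (pZ flow c h k0 p0 k).
Proof.
  intros Hf Hc. destruct (Z_le_dec k0 k).
  - unfold pZ. destruct (Z_le_dec k0 (k+1)); [|lia]. destruct (Z_le_dec k0 k); [|lia].
    replace (Z.to_nat (k + 1 - k0)) with (S (Z.to_nat (k - k0))) by lia. simpl.
    replace (k0 + Z.of_nat (Z.to_nat (k - k0)))%Z with k by lia. reflexivity.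
  - rewrite (pZ_le _ _ _ _ _ (k+1)) by lia. rewrite (pZ_le _ _ _ _ _ k) by lia.
    replace (Z.to_nat (k0 - k)) with (S (Z.to_nat (k0 - (k+1)))) by lia. simpl.
    replace (k0 - Z.of_nat (Z.to_nat (k0 - (k + 1))) - 1)%Z with k by lia.
    rewrite (fl_comp dM); [|apply Hf, Hc]. replace (h + - h) with 0 by ring.
    rewrite (fl_0 dM); [reflexivity|apply Hf, Hc].
Qed.

Definition cont_at {M} (dM : M -> M -> R) (g : R -> M) t :=
  forall eps, 0 < eps -> exists del, 0 < del /\ forall s, Rabs (s - t) < del -> dM (g t) (g s) < eps.

Lemma glue {M} (dM : M -> M -> R) (g F H : R -> M) t r : 0 < r ->
  (forall u, t <= u <= t + r -> g u = F u) -> (forall u, t - r <= u <= t -> g u = H u) ->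
  F t = g t -> H t = g t -> cont_at dM F t -> cont_at dM H t -> cont_at dM g t.
Proof.
  intros Hr HF HH Ft Ht cF cH eps He.
  destruct (cF eps He) as (d1&Hd1&H1). destruct (cH eps He) as (d2&Hd2&H2).
  exists (Rmin r (Rmin d1 d2)). split.
  { apply Rmin_pos; auto. apply Rmin_pos; auto. }
  intros s Hs. pose proof (Rmin_l r (Rmin d1 d2)). pose proof (Rmin_r r (Rmin d1 d2)).
  pose proof (Rmin_l d1 d2). pose proof (Rmin_r d1 d2).
  apply Rabs_def2 in Hs. destruct (Rle_dec t s).
  - rewrite (HF s) by lra. rewrite <- Ft. apply H1. apply Rabs_def1; lra.
  - rewrite (HH s) by lra. rewrite <- Ht. apply H2. apply Rabs_def1; lra.
Qed.

Definition P0 {M} (flow : nat -> R -> M -> M) (c : Z -> nat) h tau (x0 : M) : Z -> M :=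
  pZ flow c h (idx h tau 0) (flow (c (idx h tau 0)) (sk h tau (idx h tau 0)) x0).

Definition solg {M} (flow : nat -> R -> M -> M) (c : Z -> nat) h tau (x0 : M) (t : R) : M :=
  flow (c (idx h tau t)) (t - sk h tau (idx h tau t)) (P0 flow c h tau x0 (idx h tau t)).

Lemma solg_cell {M} (dM : M -> M -> R) n flow c h tau (x0 : M) k u :
  flows_ok dM n flow -> crange n c -> 0 < h -> sk h tau k <= u <= sk h tau k + h ->
  solg flow c h tau x0 u = flow (c k) (u - sk h tau k) (P0 flow c h tau x0 k).
Proof.
  intros Hf Hc Hh Hu. unfold solg. destruct (Rlt_dec u (sk h tau k + h)).
  - rewrite (idx_unique h tau u k) by (auto; lra). reflexivity.
  - assert (Hu' : u = sk h tau (k+1)) by (rewrite sk_succ; lra).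
    rewrite (idx_unique h tau u (k+1)) by (auto; rewrite sk_succ; lra).
    unfold P0. rewrite (pZ_succ dM n) by auto.
    replace (u - sk h tau (k+1)) with 0 by lra. rewrite (fl_0 dM) by (apply Hf, Hc).
    replace (u - sk h tau k) with h by (rewrite Hu', sk_succ; ring). reflexivity.
Qed.

Lemma solg_0 {M} (dM : M -> M -> R) n flow c h tau (x0 : M) :
  flows_ok dM n flow -> crange n c -> 0 < h -> solg flow c h tau x0 0 = x0.
Proof.
  intros Hf Hc Hh. unfold solg, P0, pZ.
  destruct (Z_le_dec (idx h tau 0) (idx h tau 0)); [|lia].
  replace (idx h tau 0 - idx h tau 0)%Z with 0%Z by lia. simpl.
  rewrite (fl_comp dM) by (apply Hf, Hc). replace (0 - sk h tau (idx h tau 0) + sk h tau (idx h tau 0)) with 0 by ring.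
  apply (fl_0 dM). apply Hf, Hc.
Qed.

Lemma Fk_cont {M} (dM : M -> M -> R) n flow (c : Z -> nat) k a (p : M) t :
  is_metric dM -> flows_ok dM n flow -> crange n c ->
  cont_at dM (fun u => flow (c k) (u - a) p) t.
Proof.
  intros Hm Hf Hc eps He. destruct (fl_cont_time dM (flow (c k)) (t - a) p eps Hm (Hf _ (Hc k)) He) as (del&Hd&H).
  exists del; split; auto. intros s Hs. apply H. replace (s - a - (t - a)) with (s - t) by ring. auto.
Qed.

Lemma solg_cont {M} (dM : M -> M -> R) n flow c h tau (x0 : M) t :
  is_metric dM -> flows_ok dM n flow -> crange n c -> 0 < h ->
  cont_at dM (solg flow c h tau x0) t.
Proof.
  intros Hm Hf Hc Hh. set (k := idx h tau t). pose proof (idx_spec h tau t Hh) as Hk. fold k in Hk.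
  destruct (Rlt_dec (sk h tau k) t).
  - apply (glue dM _ (fun u => flow (c k) (u - sk h tau k) (P0 flow c h tau x0 k))
                     (fun u => flow (c k) (u - sk h tau k) (P0 flow c h tau x0 k)) t
                     (Rmin (t - sk h tau k) (sk h tau k + h - t))).
    + apply Rmin_pos; lra.
    + intros u Hu. pose proof (Rmin_r (t - sk h tau k) (sk h tau k + h - t)). apply (solg_cell dM n); auto; lra.
    + intros u Hu. pose proof (Rmin_l (t - sk h tau k) (sk h tau k + h - t)). apply (solg_cell dM n); auto; lra.
    + symmetry; apply (solg_cell dM n); auto; lra.
    + symmetry; apply (solg_cell dM n); auto; lra.
    + apply (Fk_cont dM n); auto.
    + apply (Fk_cont dM n); auto.
  - assert (Ht : t = sk h tau k) by lra.
    assert (Hk1 : sk h tau (k - 1) + h = sk h tau k) by (rewrite <- sk_succ; f_equal; lia).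
    apply (glue dM _ (fun u => flow (c k) (u - sk h tau k) (P0 flow c h tau x0 k))
                     (fun u => flow (c (k-1)%Z) (u - sk h tau (k-1)) (P0 flow c h tau x0 (k-1))) t h).
    + exact Hh.
    + intros u Hu. apply (solg_cell dM n); auto; lra.
    + intros u Hu. apply (solg_cell dM n); auto; lra.
    + symmetry; apply (solg_cell dM n); auto; lra.
    + symmetry; apply (solg_cell dM n); auto; lra.
    + apply (Fk_cont dM n); auto.
    + apply (Fk_cont dM n); auto.
Qed.

Lemma same_cell {M} (dM : M -> M -> R) n flow c h tau (x0 : M) i a b s t :
  flows_ok dM n flow -> crange n c -> 0 < h -> (1 <= i <= n)%nat ->
  (forall u, a < u < b -> c (idx h tau u) = i) ->
  a <= s <= t -> t <= b -> t <= sk h tau (idx h tau s) + h ->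
  solg flow c h tau x0 t = flow i (t - s) (solg flow c h tau x0 s).
Proof.
  intros Hf Hc Hh Hi Hab Hs Ht Htk. set (k := idx h tau s) in *.
  pose proof (idx_spec h tau s Hh) as Hk. fold k in Hk.
  destruct (Req_dec s t) as [->|Hne].
  - replace (t - t) with 0 by ring. rewrite (fl_0 dM); auto.
  - assert (Hci : c k = i).
    { rewrite <- (Hab ((s+t)/2)) by lra. f_equal. symmetry. apply idx_unique; auto; lra. }
    rewrite (solg_cell dM n flow c h tau x0 k t) by (auto; lra).
    rewrite (solg_cell dM n flow c h tau x0 k s) by (auto; lra).
    rewrite Hci. rewrite (fl_comp dM) by auto. f_equal. ring.
Qed.

Lemma cond3_le {M} (dM : M -> M -> R) n flow c h tau (x0 : M) i a b :
  flows_ok dM n flow -> crange n c -> 0 < h -> (1 <= i <= n)%nat ->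
  (forall u, a < u < b -> c (idx h tau u) = i) ->
  forall D s t, a <= s <= t -> t <= b -> (idx h tau t - idx h tau s <= Z.of_nat D)%Z ->
  solg flow c h tau x0 t = flow i (t - s) (solg flow c h tau x0 s).
Proof.
  intros Hf Hc Hh Hi Hab D. induction D as [|D IH]; intros s t Hs Ht HD.
  - destruct (Rle_dec t (sk h tau (idx h tau s) + h)).
    + apply (same_cell dM n _ _ _ _ _ _ a b); auto.
    + exfalso. pose proof (idx_spec h tau s Hh).
      assert (idx h tau (sk h tau (idx h tau s) + h) <= idx h tau t)%Z by (apply idx_mono; lra).
      rewrite (idx_unique h tau _ (idx h tau s + 1)) in H0 by (auto; rewrite sk_succ; lra). lia.
  - destruct (Rle_dec t (sk h tau (idx h tau s) + h)).
    + apply (same_cell dM n _ _ _ _ _ _ a b); auto.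
    + pose proof (idx_spec h tau s Hh). set (s' := sk h tau (idx h tau s) + h).
      assert (Hs' : idx h tau s' = (idx h tau s + 1)%Z) by (apply idx_unique; auto; unfold s'; rewrite sk_succ; lra).
      rewrite (IH s' t) by (unfold s' in *; auto; lra || lia).
      rewrite (same_cell dM n flow c h tau x0 i a b s s') by (unfold s' in *; auto; lra).
      rewrite (fl_comp dM) by auto. f_equal. ring.
Qed.

Lemma solg_solution {M} (dM : M -> M -> R) n flow c h tau (x0 : M) :
  is_metric dM -> flows_ok dM n flow -> crange n c -> 0 < h ->
  is_solution dM flow x0 (fun s => c (idx h tau s)) (solg flow c h tau x0).
Proof.
  intros Hm Hf Hc Hh. split; [|split].
  - apply (solg_0 dM n); auto.
  - intros t. apply (solg_cont dM n); auto.
  - intros i a b Hab Hi s t Hs Ht.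
    assert (Hir : (1 <= i <= n)%nat) by (rewrite <- (Hi ((a+b)/2)) by lra; apply Hc).
    destruct (Rle_dec s t).
    + apply (cond3_le dM n _ _ _ _ _ i a b Hf Hc Hh Hir Hi (Z.to_nat (idx h tau t - idx h tau s))); try lra.
      pose proof (idx_mono h tau s t Hh r). lia.
    + rewrite (cond3_le dM n _ _ _ _ _ i a b Hf Hc Hh Hir Hi (Z.to_nat (idx h tau s - idx h tau t)) t s); try lra.
      2:{ pose proof (idx_mono h tau t s Hh). lia. }
      rewrite (fl_comp dM) by auto. replace (t - s + (s - t)) with 0 by ring. rewrite (fl_0 dM); auto.
Qed.

Definition good_c n (G : nat -> nat -> Prop) (c : Z -> nat) :=
  forall k, (1 <= c k <= n)%nat /\ G (c k) (c (k+1)%Z).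

Lemma good_in_Delta n G h tau c : 0 < h -> good_c n G c -> in_Delta n G h (fun s => c (idx h tau s)).
Proof.
  intros Hh Hc. exists (fun u => c (idx0 h u)), tau. split; [split|].
  - intros k t Ht. rewrite (idx0_unique h t k) by auto.
    rewrite (idx0_unique h (IZR k * h) k) by (auto; lra). reflexivity.
  - intros k. rewrite (idx0_unique h (IZR k * h) k) by (auto; lra).
    rewrite (idx0_unique h ((IZR k + 1) * h) (k+1)) by (auto; rewrite plus_IZR; simpl; lra).
    destruct (Hc k) as [[? ?] ?]. auto.
  - intros s. reflexivity.
Qed.

Lemma from_Delta n G h f : 0 < h -> in_Delta n G h f ->
  exists tau c, 0 <= tau < h /\ good_c n G c /\
    forall k s, sk h tau k <= s < sk h tau k + h -> f s = c k.
Proof.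
  intros Hh (x & t0 & (H1 & H2) & Hf).
  set (j := idx0 h t0). pose proof (idx0_spec h t0 Hh) as Hj. fold j in Hj.
  exists (t0 - IZR j * h), (fun k => x (IZR (k + j) * h)). split; [lra|split].
  - intros k. destruct (H2 (k + j)%Z) as (A1&A2&A3). split; [lia|].
    replace (IZR (k + 1 + j) * h) with ((IZR (k + j) + 1) * h); auto.
    rewrite !plus_IZR. simpl. ring.
  - intros k s Hs. unfold sk in Hs. rewrite Hf. apply H1. rewrite plus_IZR. lra.
Qed.

Lemma tau_cluster (taus : nat -> R) h : (forall m, 0 <= taus m <= h) ->
  exists tau, 0 <= tau <= h /\ forall eps, 0 < eps -> forall M0, exists m, (M0 <= m)%nat /\ Rabs (taus m - tau) < eps.
Proof.
  intros Ht. destruct (Bolzano_Weierstrass taus (fun c => 0 <= c <= h) (compact_P3 0 h) Ht) as [l Hl].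
  assert (Hc : forall eps, 0 < eps -> forall M0, exists m, (M0 <= m)%nat /\ Rabs (taus m - l) < eps).
  { intros eps He M0. destruct (Hl (disc l (mkposreal eps He)) M0) as (p&Hp1&Hp2).
    - exists (mkposreal eps He). intros y Hy. exact Hy.
    - exists p. split; auto. }
  exists l. split; auto. split.
  - destruct (Rle_dec 0 l); auto. exfalso. destruct (Hc (- l) ltac:(lra) 0%nat) as (m&_&Hm).
    pose proof (Ht m). apply Rabs_def2 in Hm. lra.
  - destruct (Rle_dec l h); auto. exfalso. destruct (Hc (l - h) ltac:(lra) 0%nat) as (m&_&Hm).
    pose proof (Ht m). apply Rabs_def2 in Hm. lra.
Qed.

Lemma pigeon (P : R -> nat -> Prop) (q : nat -> nat) (L : list nat) :
  (forall eps eps' m, 0 < eps <= eps' -> P eps m -> P eps' m) ->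
  (forall eps, 0 < eps -> forall M0, exists m, (M0 <= m)%nat /\ P eps m /\ In (q m) L) ->
  exists v, forall eps, 0 < eps -> forall M0, exists m, (M0 <= m)%nat /\ P eps m /\ q m = v.
Proof.
  intros Hmono. induction L as [|v L IH]; intros H.
  - destruct (H 1 ltac:(lra) 0%nat) as (m&_&_&[]).
  - destruct (classic (forall eps, 0 < eps -> forall M0, exists m, (M0 <= m)%nat /\ P eps m /\ q m = v)) as [Hv|Hv].
    + exists v; auto.
    + apply not_all_ex_not in Hv. destruct Hv as [eps0 Hv].
      apply imply_to_and in Hv. destruct Hv as [He0 Hv].
      apply not_all_ex_not in Hv. destruct Hv as [M1 Hv].
      apply IH. intros eps He M0.
      destruct (H (Rmin eps eps0) ltac:(apply Rmin_pos; auto) (Nat.max M0 M1)) as (m&Hm1&Hm2&Hm3).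
      exists m. split; [lia|]. split.
      { apply (Hmono (Rmin eps eps0)); auto. split; [apply Rmin_pos; auto|apply Rmin_l]. }
      destruct Hm3 as [Hq|Hq]; auto. exfalso. apply Hv. exists m. split; [lia|]. split; auto.
      apply (Hmono (Rmin eps eps0)); auto. split; [apply Rmin_pos; auto|apply Rmin_r].
Qed.

Definition Good (taus : nat -> R) (tau : R) (cs : nat -> Z -> nat) (W : Z -> Prop) (g : Z -> nat) :=
  forall eps, 0 < eps -> forall M0, exists m, (M0 <= m)%nat /\ Rabs (taus m - tau) < eps /\
    forall k, W k -> cs m k = g k.

Lemma Good_mono taus tau cs W W' g g' : Good taus tau cs W g ->
  (forall k, W' k -> W k /\ g k = g' k) -> Good taus tau cs W' g'.
Proof.
  intros H HW eps He M0. destruct (H eps He M0) as (m&H1&H2&H3). exists m; repeat split; auto.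
  intros k Hk. destruct (HW k Hk). rewrite H3; auto.
Qed.

Definition upd (g : Z -> nat) (k0 : Z) (v : nat) : Z -> nat :=
  fun k => if Z.eq_dec k k0 then v else g k.

Lemma Good_ext taus tau cs n W g k0 : (forall m k, (cs m k <= n)%nat) -> Good taus tau cs W g ->
  exists v, Good taus tau cs (fun k => W k \/ k = k0) (upd g k0 v).
Proof.
  intros Hn H.
  destruct (pigeon (fun eps m => Rabs (taus m - tau) < eps /\ forall k, W k -> cs m k = g k)
     (fun m => cs m k0) (seq 0 (S n))) as [v Hv].
  - intros eps eps' m He [A B]. split; auto. lra.
  - intros eps He M0. destruct (H eps He M0) as (m&H1&H2&H3). exists m. repeat split; auto.
    apply in_seq. specialize (Hn m k0). lia.
  - exists v. intros eps He M0. destruct (Hv eps He M0) as (m&H1&[H2 H3]&H4).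
    exists m. repeat split; auto. intros k [Hk|Hk]; unfold upd; destruct (Z.eq_dec k k0).
    + subst; auto.
    + auto.
    + subst; auto.
    + congruence.
Qed.

Definition Wn (N : nat) (k : Z) : Prop := (Z.abs k < Z.of_nat N)%Z.

Lemma build_c taus tau cs n : (forall m k, (cs m k <= n)%nat) ->
  (forall eps, 0 < eps -> forall M0, exists m, (M0 <= m)%nat /\ Rabs (taus m - tau) < eps) ->
  exists c : Z -> nat, forall N, Good taus tau cs (Wn N) c.
Proof.
  intros Hn Htau.
  assert (Hstep : forall (p : (Z -> nat) * nat), exists g',
    (Good taus tau cs (Wn (snd p)) (fst p) -> Good taus tau cs (Wn (S (snd p))) g') /\
    forall k, Wn (snd p) k -> g' k = fst p k).
  { intros [g N]. simpl. destruct (classic (Good taus tau cs (Wn N) g)) as [Hg|Hg].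
    - destruct (Good_ext taus tau cs n (Wn N) g (Z.of_nat N) Hn Hg) as [v1 H1].
      destruct (Good_ext taus tau cs n _ _ (- Z.of_nat N)%Z Hn H1) as [v2 H2].
      exists (upd (upd g (Z.of_nat N) v1) (- Z.of_nat N)%Z v2). split.
      + intros _. apply (Good_mono _ _ _ _ _ _ _ H2). intros k Hk. split; auto.
        unfold Wn in *. lia.
      + intros k Hk. unfold upd, Wn in *. destruct (Z.eq_dec k (- Z.of_nat N)); [lia|].
        destruct (Z.eq_dec k (Z.of_nat N)); [lia|]. reflexivity.
    - exists g. split; [tauto|auto]. }
  destruct (choice _ Hstep) as [step Hs].
  set (sq := fix sq (N : nat) : Z -> nat := match N with O => (fun _ => 1%nat) | S N' => step (sq N', N') end).
  assert (HG : forall N, Good taus tau cs (Wn N) (sq N)).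
  { induction N as [|N IH].
    - intros eps He M0. destruct (Htau eps He M0) as (m&H1&H2). exists m; repeat split; auto.
      intros k Hk. unfold Wn in Hk. simpl in Hk. lia.
    - simpl. apply (proj1 (Hs (sq N, N))). exact IH. }
  assert (HA : forall N d k, Wn N k -> sq (d + N)%nat k = sq N k).
  { intros N d k Hk. induction d as [|d IH]; auto. simpl.
    rewrite (proj2 (Hs (sq (d + N)%nat, (d+N)%nat))); auto. simpl. unfold Wn in *. lia. }
  exists (fun k => sq (S (Z.abs_nat k)) k). intros N.
  apply (Good_mono _ _ _ _ _ _ _ (HG N)). intros k Hk. split; auto.
  unfold Wn in Hk. replace N with ((N - S (Z.abs_nat k)) + S (Z.abs_nat k))%nat by lia.
  apply HA. unfold Wn. lia.
Qed.

Lemma sol_cell {M} (dM : M -> M -> R) flow (x : M) f gam tau c h k u v :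
  is_solution dM flow x f gam -> (forall k s, sk h tau k <= s < sk h tau k + h -> f s = c k) -> 0 < h ->
  sk h tau k <= u <= sk h tau k + h -> sk h tau k <= v <= sk h tau k + h ->
  gam u = flow (c k) (u - v) (gam v).
Proof.
  intros (_&_&H3) Hf Hh Hu Hv. apply (H3 (c k) (sk h tau k) (sk h tau k + h)); auto; try lra.
  intros w Hw. apply Hf. lra.
Qed.

Definition clE {M} (dM : M -> M -> R) (E : M -> Prop) z := forall r, 0 < r -> exists y, E y /\ dM z y < r.

Lemma arch_inv del : 0 < del -> exists M0, forall m, (M0 <= m)%nat -> / (INR m + 1) < del.
Proof.
  intros Hd. destruct (archimed_cor1 del Hd) as (N&H1&H2). exists N. intros m Hm.
  apply le_INR in Hm. apply lt_INR in H2. simpl in H2.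
  apply Rle_lt_trans with (/ INR N); auto. apply Rinv_le_contravar; lra.
Qed.

Lemma sk0 h tau : sk h tau 0 = - tau.
Proof. unfold sk. simpl. ring. Qed.

Lemma limit_lemma {M} (dM : M -> M -> R) n G h flow (E : M -> Prop) (x : M) (e : nat -> M) taus cs gams :
  is_metric dM -> flows_ok dM n flow -> 0 < h ->
  (forall m, dM x (e m) < / (INR m + 1)) -> (forall m, 0 <= taus m <= h) -> (forall m, good_c n G (cs m)) ->
  (forall m k u v, sk h (taus m) k <= u <= sk h (taus m) k + h -> sk h (taus m) k <= v <= sk h (taus m) k + h ->
     gams m u = flow (cs m k) (u - v) (gams m v)) ->
  (forall m, gams m 0 = e m) -> (forall m t, E (gams m t)) ->
  exists f gam, in_Delta n G h f /\ is_solution dM flow x f gam /\ forall t, clE dM E (gam t).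
Proof.
  intros Hm Hf Hh He Htaus Hcs Hgc Hg0 HgE.
  destruct (tau_cluster taus h Htaus) as (tau&Ht01&Htau).
  destruct (build_c taus tau cs n) as [c Hc]; auto.
  { intros m k. destruct (Hcs m k) as [[_ ?] _]. auto. }
  assert (Hgood : good_c n G c).
  { intros k. destruct (Hc (S (S (Z.abs_nat k))) 1 ltac:(lra) 0%nat) as (m&_&_&Hm').
    rewrite <- (Hm' k) by (unfold Wn; lia). rewrite <- (Hm' (k+1)%Z) by (unfold Wn; lia). apply Hcs. }
  assert (Hcr : crange n c) by (intros k; apply Hgood).
  set (gam := solg flow c h tau x).
  assert (Hsol : is_solution dM flow x (fun s => c (idx h tau s)) gam) by (apply (solg_solution dM n); auto).
  assert (Hcells : forall k s, sk h tau k <= s < sk h tau k + h -> c (idx h tau s) = c k).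
  { intros k s Hs. rewrite (idx_unique h tau s k); auto. }
  assert (gcell : forall k u v, sk h tau k <= u <= sk h tau k + h -> sk h tau k <= v <= sk h tau k + h ->
     gam u = flow (c k) (u - v) (gam v)).
  { intros k u v Hu Hv. apply (sol_cell dM flow x _ gam tau c h k u v Hsol Hcells Hh Hu Hv). }
  assert (HQ : forall k, forall eps, 0 < eps -> exists del, 0 < del /\ exists N M0, forall m, (M0 <= m)%nat ->
     Rabs (taus m - tau) < del -> (forall k', Wn N k' -> cs m k' = c k') ->
     dM (gam (sk h tau k)) (gams m (sk h (taus m) k)) < eps).
  { intro kk; pattern kk; apply Z.peano_ind; clear kk.
    - intros eps Heps. destruct (Hf (c 0%Z) (Hcr 0%Z)) as (_&_&Hcont).
      destruct (Hcont (- tau) x eps Heps) as (del&Hdel&Hd).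
      destruct (arch_inv del Hdel) as [M0 HM0].
      exists del; split; auto. exists 1%nat, M0. intros m Hm0 Htm Hag.
      rewrite (gcell 0%Z (sk h tau 0) 0) by (rewrite sk0; lra).
      rewrite (Hgc m 0%Z (sk h (taus m) 0) 0) by (rewrite sk0; pose proof (Htaus m); lra).
      rewrite Hag by (unfold Wn; simpl; lia).
      rewrite !sk0, Hg0. replace (gam 0) with x by (symmetry; apply Hsol).
      replace (- tau - 0) with (- tau) by ring. apply Hd.
      + replace (- taus m - 0 - - tau) with (- (taus m - tau)) by ring. rewrite Rabs_Ropp. auto.
      + pose proof (HM0 m Hm0). pose proof (He m). lra.
    - intros k IH eps Heps. replace (Z.succ k) with (k+1)%Z by lia.
      destruct (fl_cont_space dM (flow (c k)) h (gam (sk h tau k)) eps (Hf _ (Hcr k)) Heps) as (d'&Hd'&Hsp).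
      destruct (IH d' Hd') as (del&Hdel&N&M0&HN).
      exists del; split; auto. exists (Nat.max N (S (Z.abs_nat k))), M0. intros m Hm0 Htm Hag.
      rewrite (gcell k (sk h tau (k+1)) (sk h tau k)) by (try rewrite sk_succ; lra).
      rewrite (Hgc m k (sk h (taus m) (k+1)) (sk h (taus m) k)) by (try rewrite sk_succ; lra).
      rewrite !sk_succ. replace (sk h tau k + h - sk h tau k) with h by ring.
      replace (sk h (taus m) k + h - sk h (taus m) k) with h by ring.
      rewrite Hag by (unfold Wn; lia). apply Hsp. apply HN; auto.
      intros k' Hk'. apply Hag. unfold Wn in *. lia.
    - intros k IH eps Heps. replace (Z.pred k) with (k-1)%Z by lia.
      assert (E1 : forall tt, sk h tt (k-1) + h = sk h tt k) by (intros; rewrite <- sk_succ; f_equal; lia).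
      destruct (fl_cont_space dM (flow (c (k-1)%Z)) (-h) (gam (sk h tau k)) eps (Hf _ (Hcr _)) Heps) as (d'&Hd'&Hsp).
      destruct (IH d' Hd') as (del&Hdel&N&M0&HN).
      exists del; split; auto. exists (Nat.max N (S (Z.abs_nat (k-1)))), M0. intros m Hm0 Htm Hag.
      rewrite (gcell (k-1)%Z (sk h tau (k-1)) (sk h tau k)) by (try rewrite <- (E1 tau); lra).
      rewrite (Hgc m (k-1)%Z (sk h (taus m) (k-1)) (sk h (taus m) k)) by (try rewrite <- (E1 (taus m)); lra).
      rewrite <- (E1 tau), <- (E1 (taus m)).
      replace (sk h tau (k-1) - (sk h tau (k-1) + h)) with (-h) by ring.
      replace (sk h (taus m) (k-1) - (sk h (taus m) (k-1) + h)) with (-h) by ring.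
      rewrite (E1 tau), (E1 (taus m)).
      rewrite Hag by (unfold Wn; lia). apply Hsp. apply HN; auto.
      intros k' Hk'. apply Hag. unfold Wn in *. lia. }
  exists (fun s => c (idx h tau s)), gam. split; [apply good_in_Delta; auto|]. split; auto.
  intros t r Hr. set (k := idx h tau t). pose proof (idx_spec h tau t Hh) as Hk. fold k in Hk.
  destruct (fl_cont_space dM (flow (c k)) (t - sk h tau k) (gam (sk h tau k)) r (Hf _ (Hcr k)) Hr) as (d'&Hd'&Hsp).
  destruct (HQ k d' Hd') as (del&Hdel&N&M0&HN).
  destruct (Hc (Nat.max N (S (Z.abs_nat k))) del Hdel M0) as (m&Hm0&Htm&Hag).
  exists (gams m (t - sk h tau k + sk h (taus m) k)). split; auto.
  rewrite (gcell k t (sk h tau k)) by lra.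
  rewrite (Hgc m k _ (sk h (taus m) k)) by lra.
  replace (t - sk h tau k + sk h (taus m) k - sk h (taus m) k) with (t - sk h tau k) by ring.
  rewrite Hag by (unfold Wn; lia). apply Hsp. apply HN; auto.
  intros k' Hk'. apply Hag. unfold Wn in *. lia.
Qed.

Lemma clE_traj {M} (dM : M -> M -> R) n G h flow (E : M -> Prop) z :
  is_metric dM -> flows_ok dM n flow -> 0 < h -> chain_set dM n G h flow E -> clE dM E z ->
  exists f gam, in_Delta n G h f /\ is_solution dM flow z f gam /\ forall t, clE dM E (gam t).
Proof.
  intros Hm Hf Hh [HE1 _] Hz.
  assert (Hex : forall m : nat, exists p : M * R * (Z -> nat) * (R -> M),
    let '(e, tau, c, gam) := p in
    dM z e < / (INR m + 1) /\ 0 <= tau <= h /\ good_c n G c /\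
    (forall k u v, sk h tau k <= u <= sk h tau k + h -> sk h tau k <= v <= sk h tau k + h ->
       gam u = flow (c k) (u - v) (gam v)) /\ gam 0 = e /\ forall t, E (gam t)).
  { intros m. assert (Hpos : 0 < / (INR m + 1)) by (apply Rinv_0_lt_compat; pose proof (pos_INR m); lra).
    destruct (Hz _ Hpos) as (e&He&Hd).
    destruct (HE1 e He) as (f&gam&Hdel&Hsol&Hin).
    destruct (from_Delta n G h f Hh Hdel) as (tau&c&Ht&Hc&Hcell).
    exists (e, tau, c, gam). simpl. split; [exact Hd|]. split; [lra|]. split; [exact Hc|]. split.
    - intros k u v Hu Hv. apply (sol_cell dM flow e f gam tau c h k u v Hsol Hcell Hh Hu Hv).
    - split; [apply Hsol|exact Hin]. }
  destruct (choice _ Hex) as [F HF].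
  apply (limit_lemma dM n G h flow E z (fun m => fst (fst (fst (F m)))) (fun m => snd (fst (fst (F m))))
          (fun m => snd (fst (F m))) (fun m => snd (F m))); auto;
  intros m; specialize (HF m); destruct (F m) as [[[e tau] c] gam]; simpl; tauto.
Qed.

Lemma clE_chain {M} (dM : M -> M -> R) n G h flow (E : M -> Prop) :
  is_metric dM -> flows_ok dM n flow -> 0 < h -> chain_set dM n G h flow E ->
  chain_set dM n G h flow (clE dM E).
Proof.
  intros Hm Hf Hh HE. split.
  - intros z Hz. apply (clE_traj dM n G h flow E z); auto.
  - intros z w Hz Hw eps T He HT.
    destruct (clE_traj dM n G h flow E z Hm Hf Hh HE Hz) as (f&gam&Hdel&Hsol&Hin).
    destruct (Hin T (eps/2) ltac:(lra)) as (e1&He1&Hd1).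
    destruct (Hw (eps/2) ltac:(lra)) as (e2&He2&Hd2).
    destruct (proj2 HE e1 e2 He1 He2 (eps/2) T ltac:(lra) HT) as (k&xs&fs&ts&Hk&Hx0&Hxk&Hst).
    exists (S k), (fun j => match j with O => z | S j' => if Nat.eq_dec j' k then w else xs j' end),
      (fun j => match j with O => f | S j' => fs j' end),
      (fun j => match j with O => T | S j' => ts j' end).
    split; [lia|]. split; [reflexivity|]. split.
    { destruct (Nat.eq_dec k k); [reflexivity|congruence]. }
    intros j Hj. destruct j as [|j].
    + split; auto. split; [lra|]. exists gam. split; auto.
      destruct (Nat.eq_dec 0 k); [lia|]. rewrite Hx0. lra.
    + destruct (Hst j ltac:(lia)) as (A1&A2&g&Hg&Hgd). split; auto. split; auto.
      destruct (Nat.eq_dec j k); [lia|]. exists g. split; auto.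
      destruct (Nat.eq_dec (S j) k).
      * destruct Hm as (_&_&Hsym&Htri). subst k. rewrite Hxk in Hgd.
        pose proof (Htri (g (ts j)) e2 w). rewrite (Hsym e2 w) in H. lra.
      * lra.
Qed.

Theorem mainTheorem15
  (M : Type) (dM : M -> M -> R) (n : nat) (G : nat -> nat -> Prop) (h : R)
  (flow : nat -> R -> M -> M) (E : M -> Prop) :
  is_metric dM -> m_compact_space dM -> 0 < h ->
  (forall i, (1 <= i <= n)%nat -> is_cont_flow dM (flow i)) ->
  maximal_chain_set dM n G h flow E ->
  m_closed dM E /\ m_compact dM E.
Proof.
  intros Hm Hcomp Hh Hf [HE Hmax].
  assert (Hcl : forall z, clE dM E z -> E z).
  { apply (Hmax (clE dM E)).
    - apply (clE_chain dM n G h flow E); auto.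
    - intros x Hx r Hr. exists x. split; auto. rewrite met_refl; auto. }
  assert (Hclosed : m_closed dM E).
  { intros x Hx. apply NNPP. intros Hno. apply Hx, Hcl. intros r Hr.
    apply NNPP. intros Hn. apply Hno. exists r. split; auto. intros y Hy HEy.
    apply Hn. exists y. auto. }
  split; auto.
  intros I U HU Hcov.
  destruct (Hcomp (option I) (fun o x => match o with Some i => U i x | None => ~ E x end)) as [l Hl].
  - intros [i|]; [apply HU|apply Hclosed].
  - intros x _. destruct (classic (E x)) as [Hx|Hx].
    + destruct (Hcov x Hx) as [i Hi]. exists (Some i); auto.
    + exists None; auto.
  - exists (flat_map (fun o => match o with Some i => i :: nil | None => nil end) l).
    intros x Hx. destruct (Hl x Logic.I) as [[i|] [Hin Hi]].
    + exists i. split; auto. apply in_flat_map. exists (Some i). split; auto. simpl; auto.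
    + contradiction.
Qed.
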